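(* In the four-player team game of dominoes described in the context, the following hold for games that end in a tranca: (a) the minimum, over all such games, of the number of tiles on the board at the end of the game is $10$; (b) the minimum, over all such games, of the total number of pips on the tiles of the board at the end of the game is $42$.
   Context: Domino tiles: the set of tiles consists of the 28 unordered pairs $[a,b]=[b,a]$ with $a,b\in\{0,1,\dots,6\}$; the number of points (pips) of $[a,b]$ is $a+b$. Four players, numbered 1 to 4, play; players 1 and 3 form one team and players 2 and 4 the other. The 28 tiles are dealt, 7 to each player (the initial hands). Players take turns in cyclic order $1,2,3,4,1,\dots$. The starting player places any one of their tiles on the table, forming a line of tiles (the board) with two open ends. On each subsequent turn, the player whose turn it is must, if they hold a tile containing a number equal to the number shown at one of the two open ends, place such a tile at that end (with equal numbers adjacent), the other number of the tile becoming the new open end; if they hold no such tile, they pass. A game ends either when a player places their last tile, or in a tranca (blocked game): a position in which no player holds a tile that can be placed. *)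

(* Defs.v *)
From mathcomp Require Import all_boot.
Set Implicit Arguments. Unset Strict Implicit. Unset Printing Implicit Defensive.

(* A tile [a,b] is represented by the normalized pair (a,b) with a <= b <= 6. *)
Definition tile := (nat * nat)%type.

Definition all_tiles : seq tile :=
  [seq (a, b) | a <- iota 0 7, b <- iota a (7 - a)].

Definition pips (t : tile) : nat := t.1 + t.2.

(* Players 1,2,3,4 of the paper are indexed 0,1,2,3. *)
Definition next_player (p : nat) : nat := p.+1 %% 4.

Record state := State {
  turn  : nat;
  hands : nat -> seq tile;
  ends  : nat * nat;
  board : seq tile           (* tiles on the board (as a multiset) *)
}.

Definition matches (t : tile) (x : nat) : bool := (t.1 == x) || (t.2 == x).
(* the number that becomes the new open end when t is placed on end x *)
Definition other (t : tile) (x : nat) : nat := if t.1 == x then t.2 else t.1.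

Definition playable (h : seq tile) (e : nat * nat) : bool :=
  has (fun t => matches t e.1 || matches t e.2) h.

Definition upd_hand (h : nat -> seq tile) (p : nat) (s : seq tile) :=
  fun j => if j == p then s else h j.

Definition blocked (s : state) : Prop :=
  forall i, i < 4 -> ~~ playable (hands s i) (ends s).

Definition someone_out (s : state) : Prop :=
  exists2 i, i < 4 & hands s i = [::].

Definition game_over (s : state) : Prop := someone_out s \/ blocked s.

(* One turn (after the opening move). *)
Inductive step : state -> state -> Prop :=
| step_left s t :
    ~ game_over s -> t \in hands s (turn s) -> matches t (ends s).1 ->
    step s (State (next_player (turn s))
                  (upd_hand (hands s) (turn s) (rem t (hands s (turn s))))
                  (other t (ends s).1, (ends s).2)
                  (t :: board s))
| step_right s t :
    ~ game_over s -> t \in hands s (turn s) -> matches t (ends s).2 ->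
    step s (State (next_player (turn s))
                  (upd_hand (hands s) (turn s) (rem t (hands s (turn s))))
                  ((ends s).1, other t (ends s).2)
                  (t :: board s))
| step_pass s :
    ~ game_over s -> ~~ playable (hands s (turn s)) (ends s) ->
    step s (State (next_player (turn s)) (hands s) (ends s) (board s)).

Inductive reach (s0 : state) : state -> Prop :=
| reach_refl : reach s0 s0
| reach_step s s' : reach s0 s -> step s s' -> reach s0 s'.

Definition valid_deal (h : nat -> seq tile) : Prop :=
  (forall i, i < 4 -> size (h i) = 7) /\
  perm_eq (h 0 ++ h 1 ++ h 2 ++ h 3) all_tiles.

Definition opening (h : nat -> seq tile) (t : tile) : state :=
  State (next_player 0) (upd_hand h 0 (rem t (h 0))) (t.1, t.2) [:: t].

Definition tranca_final (s : state) : Prop :=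
  exists h t, [/\ valid_deal h, t \in h 0, reach (opening h t) s,
                  blocked s & ~ someone_out s].

Definition board_tiles (s : state) : nat := size (board s).
Definition board_pips (s : state) : nat := sumn (map pips (board s)).

(* Main.v *)
Require Import Defs.
From mathcomp Require Import all_boot.
From mathcomp Require Import zify.
Set Implicit Arguments. Unset Strict Implicit. Unset Printing Implicit Defensive.

Definition outb (s : state) := has (fun i => hands s i == [::]) (iota 0 4).
Definition blockedb (s : state) :=
  all (fun i => ~~ playable (hands s i) (ends s)) (iota 0 4).

Lemma outbP s : ~~ outb s -> ~ someone_out s.
Proof.
move=> /hasPn H [i Hi Hh]; have := H i; rewrite mem_iota Hi Hh /= => /(_ isT).
done.
Qed.

Lemma blockedbP s : blockedb s -> blocked s.
Proof. by move=> /allP H i Hi; apply: H; rewrite mem_iota. Qed.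

Lemma nblockedbP s : ~~ blockedb s -> ~ blocked s.
Proof.
move=> /allPn [i]; rewrite mem_iota /= => Hi Hp Hb.
by move: (Hb i Hi); rewrite (negbTE Hp).
Qed.

Lemma ngo s : ~~ outb s -> ~~ blockedb s -> ~ game_over s.
Proof. by move=> H1 H2 [/(outbP H1)|/(nblockedbP H2)]. Qed.

Inductive mv := ML of tile | MR of tile | MP.

Definition step_fn (s : state) (m : mv) : state :=
  match m with
  | ML t => State (next_player (turn s))
                  (upd_hand (hands s) (turn s) (rem t (hands s (turn s))))
                  (other t (ends s).1, (ends s).2)
                  (t :: board s)
  | MR t => State (next_player (turn s))
                  (upd_hand (hands s) (turn s) (rem t (hands s (turn s))))
                  ((ends s).1, other t (ends s).2)
                  (t :: board s)
  | MP => State (next_player (turn s)) (hands s) (ends s) (board s)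
  end.

Definition legal (s : state) (m : mv) : bool :=
  ~~ outb s && ~~ blockedb s &&
  match m with
  | ML t => (t \in hands s (turn s)) && matches t (ends s).1
  | MR t => (t \in hands s (turn s)) && matches t (ends s).2
  | MP => ~~ playable (hands s (turn s)) (ends s)
  end.

Lemma legal_step s m : legal s m -> step s (step_fn s m).
Proof.
case/andP=> /andP [H1 H2]; have G := ngo H1 H2.
case: m => [t|t|] /=.
- by case/andP=> Ht Hm; apply: step_left.
- by case/andP=> Ht Hm; apply: step_right.
- by move=> Hp; apply: step_pass.
Qed.

Fixpoint exec (s : state) (ms : seq mv) : state :=
  if ms is m :: ms' then exec (step_fn s m) ms' else s.
Fixpoint valid (s : state) (ms : seq mv) : bool :=
  if ms is m :: ms' then legal s m && valid (step_fn s m) ms' else true.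

Lemma valid_reach s0 ms : forall s, reach s0 s -> valid s ms -> reach s0 (exec s ms).
Proof.
elim: ms => [|m ms IH] s Hr //= /andP [Hl Hv].
apply: IH Hv; exact: reach_step Hr (legal_step Hl).
Qed.

Definition h_ex (i : nat) : seq tile :=
  match i with
  | 0 => [:: (3, 3); (3, 6); (0, 4); (4, 6); (2, 6); (0, 6); (1, 1)]
  | 1 => [:: (1, 3); (0, 1); (1, 4); (2, 4); (1, 2); (6, 6); (2, 2)]
  | 2 => [:: (2, 5); (3, 4); (5, 6); (3, 5); (1, 6); (0, 5); (4, 5)]
  | _ => [:: (4, 4); (5, 5); (0, 0); (2, 3); (1, 5); (0, 3); (0, 2)]
  end.
Definition t_ex : tile := (0, 4).
Definition ms_ex : seq mv :=
  [:: ML (0,1); MR (3,4); MR (0,3); MR (0,6); ML (1,2); MR (5,6); ML (0,2);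
      MP; MP; MR (0,5); MR (0,0)].
Definition s_ex := exec (opening h_ex t_ex) ms_ex.

Lemma s_ex_final : tranca_final s_ex.
Proof.
exists h_ex, t_ex; split.
- split; last by vm_compute.
  by move=> i; do 4! (case: i => [|i] //).
- by vm_compute.
- apply: valid_reach; first exact: reach_refl.
  by vm_compute.
- by apply: blockedbP; vm_compute.
- by apply: outbP; vm_compute.
Qed.

Lemma s_ex_tiles : board_tiles s_ex = 10. Proof. by vm_compute. Qed.
Lemma s_ex_pips : board_pips s_ex = 42. Proof. by vm_compute. Qed.
Definition Hc (v : nat) (B : seq tile) :=
  count (fun t : tile => t.1 == v) B + count (fun t : tile => t.2 == v) B.
Definition hand_cat (h : nat -> seq tile) := h 0 ++ h 1 ++ h 2 ++ h 3.
Definition pipsum (B : seq tile) := sumn (map pips B).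

Definition Inv (s : state) : Prop :=
  [/\ turn s < 4, perm_eq (board s ++ hand_cat (hands s)) all_tiles,
      (ends s).1 < 7, (ends s).2 < 7 &
      forall v, ~~ odd (Hc v (board s) + ((ends s).1 == v) + ((ends s).2 == v))].

Lemma all_tiles_bnd t : t \in all_tiles -> t.1 < 7 /\ t.2 < 7.
Proof.
have H : all (fun t : tile => (t.1 < 7) && (t.2 < 7)) all_tiles by vm_compute.
by move=> /(allP H) /andP [].
Qed.

Lemma rem_count (a : pred tile) t h : t \in h -> count a h = a t + count a (rem t h).
Proof. by move=> Ht; rewrite (permP (perm_to_rem Ht)). Qed.

Lemma perm_play (h : nat -> seq tile) p t B : p < 4 -> t \in h p ->
  perm_eq (t :: B ++ hand_cat (upd_hand h p (rem t (h p)))) (B ++ hand_cat h).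
Proof.
move=> Hp Ht; apply/permP => a.
case: p Hp Ht => [|[|[|[|p]]]] // _ Ht; rewrite /hand_cat /upd_hand /= !count_cat
  (rem_count a Ht) /tile; lia.
Qed.

Lemma par1 t x v n (c : bool) : matches t x -> ~~ odd (n + (x == v) + c) ->
  ~~ odd ((t.1 == v) + (t.2 == v) + n + (other t x == v) + c).
Proof.
case: t => a b; rewrite /matches /other /=.
case: (eqVneq a x) => [->|ne] /=.
- by move=> _; rewrite !oddD; case: (x == v); case: (b == v); case: (odd n); case: c.
- move=> /eqP ->; rewrite !oddD.
  by case: (x == v); case: (a == v); case: (odd n); case: c.
Qed.

Lemma par2 t x v n (c : bool) : matches t x -> ~~ odd (n + c + (x == v)) ->
  ~~ odd ((t.1 == v) + (t.2 == v) + n + c + (other t x == v)).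
Proof.
case: t => a b; rewrite /matches /other /=.
case: (eqVneq a x) => [->|ne] /=.
- by move=> _; rewrite !oddD; case: (x == v); case: (b == v); case: (odd n); case: c.
- move=> /eqP ->; rewrite !oddD.
  by case: (x == v); case: (a == v); case: (odd n); case: c.
Qed.

Lemma Hc_cons v t B : Hc v (t :: B) = (t.1 == v) + (t.2 == v) + Hc v B.
Proof. rewrite /Hc /=; lia. Qed.

Lemma other_bnd t x : t \in all_tiles -> other t x < 7.
Proof. by case/all_tiles_bnd => ? ?; rewrite /other; case: ifP. Qed.

Lemma inv_step s s' : step s s' -> Inv s -> Inv s'.
Proof.
case=> {s s'} [s t _ Hin Hm|s t _ Hin Hm|s _ Hnp] [Ht Hp He1 He2 Hpar];
  rewrite /Inv /=; (split; [by rewrite /next_player ltn_pmod|..]) => //.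
- exact: perm_trans (perm_play (board s) Ht Hin) Hp.
- apply: other_bnd; rewrite -(perm_mem Hp) mem_cat; apply/orP; right.
  by move: Ht Hin; rewrite /hand_cat !mem_cat; case: (turn s) => [|[|[|[|]]]] // _ ->; rewrite ?orbT.
- by move=> v; rewrite Hc_cons; apply: par1.
- exact: perm_trans (perm_play (board s) Ht Hin) Hp.
- apply: other_bnd; rewrite -(perm_mem Hp) mem_cat; apply/orP; right.
  by move: Ht Hin; rewrite /hand_cat !mem_cat; case: (turn s) => [|[|[|[|]]]] // _ ->; rewrite ?orbT.
- by move=> v; rewrite Hc_cons; apply: par2.
Qed.

Lemma inv_open h t : valid_deal h -> t \in h 0 -> Inv (opening h t).
Proof.
case=> _ Hp Ht; split => //=.
- exact: perm_trans (perm_play [::] (isT : 0 < 4) Ht) Hp.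
- by case: (all_tiles_bnd (t := t) _) => //; rewrite -(perm_mem Hp) mem_cat Ht.
- by case: (all_tiles_bnd (t := t) _) => //; rewrite -(perm_mem Hp) mem_cat Ht.
- move=> v; rewrite /Hc /= !oddD.
  by case: (t.1 == v); case: (t.2 == v).
Qed.

Lemma inv_reach s0 s : Inv s0 -> reach s0 s -> Inv s.
Proof. move=> H; elim=> // s1 s2 _ IH Hs; exact: inv_step Hs IH. Qed.

Lemma split_perm (P : pred tile) (B : seq tile) : uniq B -> {subset B <= all_tiles} ->
  (forall t, t \in all_tiles -> P t -> t \in B) ->
  perm_eq B (filter P all_tiles ++ filter (predC P) B).
Proof.
move=> Hu Hs Hin.
apply: (perm_trans (y := filter P B ++ filter (predC P) B)).
  by rewrite perm_sym perm_filterC.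
rewrite perm_cat2r; apply: uniq_perm; rewrite ?filter_uniq //.
move=> t; rewrite !mem_filter; case Pt: (P t) => //=.
apply/idP/idP; [exact: Hs | exact: (Hin _ ^~ Pt)].
Qed.

Lemma sum_ind a : a < 7 ->
  (a == 0) + (a == 1) + (a == 2) + (a == 3) + (a == 4) + (a == 5) + (a == 6) = 1 /\
  1 * (a == 1) + 2 * (a == 2) + 3 * (a == 3) + 4 * (a == 4) + 5 * (a == 5) + 6 * (a == 6) = a.
Proof. by do 7! (case: a => [|a] //). Qed.

Lemma Hc_sum (R : seq tile) : (forall t, t \in R -> t.1 < 7 /\ t.2 < 7) ->
  Hc 0 R + Hc 1 R + Hc 2 R + Hc 3 R + Hc 4 R + Hc 5 R + Hc 6 R = 2 * size R /\
  pipsum R = 1 * Hc 1 R + 2 * Hc 2 R + 3 * Hc 3 R + 4 * Hc 4 R + 5 * Hc 5 R + 6 * Hc 6 R.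
Proof.
elim: R => [|[p q] R IH] H; first by [].
have [IH1 IH2] : _ /\ _ := IH (fun u Hu => H u (mem_behead (s := (p, q) :: R) Hu)).
have [h1 h2] := H (p, q) (mem_head _ _).
have [a1 a2] := sum_ind h1; have [b1 b2] := sum_ind h2.
rewrite !Hc_cons /pipsum /= -/(pipsum R) /pips /=.
rewrite /= in a1 a2 b1 b2.
move: IH1 IH2 a1 a2 b1 b2.
move: (nat_of_bool (p == 0)) (nat_of_bool (p == 1)) (nat_of_bool (p == 2))
  (nat_of_bool (p == 3)) (nat_of_bool (p == 4)) (nat_of_bool (p == 5))
  (nat_of_bool (p == 6)) (nat_of_bool (q == 0)) (nat_of_bool (q == 1))
  (nat_of_bool (q == 2)) (nat_of_bool (q == 3)) (nat_of_bool (q == 4))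
  (nat_of_bool (q == 5)) (nat_of_bool (q == 6)).
rewrite /tile; lia.
Qed.

Lemma Hc0 x (R : seq tile) : (forall t, t \in R -> ~~ matches t x) -> Hc x R = 0.
Proof.
elim: R => [|t R IH] H //; rewrite Hc_cons IH; last by move=> u Hu; apply: H; rewrite inE Hu orbT.
have := H t (mem_head _ _); rewrite /matches.
by case: (t.1 == x); case: (t.2 == x).
Qed.

Definition Fx (a b : nat) := filter (fun t => matches t a || matches t b) all_tiles.

Lemma Fx_check : all (fun a => all (fun b => (a == b) ||
   ((13 <= size (Fx a b)) && (42 <= pipsum (Fx a b)))) (iota 0 7)) (iota 0 7).
Proof. by vm_compute. Qed.

Definition Xx (x : nat) := filter (fun t => matches t x) all_tiles.

Lemma Xx_check : all (fun x => [&& size (Xx x) == 7, pipsum (Xx x) == 7 * x + 21 &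
   all (fun v => Hc v (Xx x) == (if v == x then 8 else 1)) (iota 0 7)]) (iota 0 7).
Proof. by vm_compute. Qed.

Lemma perm_facts (B X R : seq tile) : perm_eq B (X ++ R) ->
  [/\ size B = size X + size R, pipsum B = pipsum X + pipsum R &
      forall v, Hc v B = Hc v X + Hc v R].
Proof.
move=> Hp; split.
- by rewrite (perm_size Hp) size_cat.
- by rewrite /pipsum (perm_sumn (perm_map pips Hp)) map_cat sumn_cat.
- by move=> v; rewrite /Hc !(permP Hp) !count_cat addnACA.
Qed.

Lemma final_arith (R : seq tile) x : x < 7 -> Hc x R = 0 ->
  (forall v, v < 7 -> v != x -> 0 < Hc v R) ->
  Hc 0 R + Hc 1 R + Hc 2 R + Hc 3 R + Hc 4 R + Hc 5 R + Hc 6 R = 2 * size R ->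
  pipsum R = 1 * Hc 1 R + 2 * Hc 2 R + 3 * Hc 3 R + 4 * Hc 4 R + 5 * Hc 5 R + 6 * Hc 6 R ->
  10 <= 7 + size R /\ 42 <= 7 * x + 21 + pipsum R.
Proof.
move=> Hx H0 Pos.
have p0 := Pos 0; have p1 := Pos 1; have p2 := Pos 2; have p3 := Pos 3;
have p4 := Pos 4; have p5 := Pos 5; have p6 := Pos 6.
move: p0 p1 p2 p3 p4 p5 p6 H0; clear Pos.
move: (Hc 0 R) (Hc 1 R) (Hc 2 R) (Hc 3 R) (Hc 4 R) (Hc 5 R) (Hc 6 R) (size R) (pipsum R).
by case: x Hx => [|[|[|[|[|[|[|?]]]]]]] //= _; lia.
Qed.

Lemma bound s : Inv s -> blocked s -> 10 <= size (board s) /\ 42 <= pipsum (board s).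
Proof.
case: s => tu h [e1 e2] B [/= _ Hp He1 He2 Hpar] Hbl.
have Hu : uniq B.
  have U : uniq (B ++ hand_cat h) by rewrite (perm_uniq Hp); vm_compute.
  by move: U; rewrite cat_uniq => /andP [].
have Hs : {subset B <= all_tiles}.
  by move=> t Ht; rewrite -(perm_mem Hp) mem_cat Ht.
have Hin : forall t, t \in all_tiles -> matches t e1 || matches t e2 -> t \in B.
  move=> t; rewrite -(perm_mem Hp) mem_cat => /orP [//|Hh] Hm.
  exfalso; move: Hh; rewrite /hand_cat !mem_cat.
  have K : forall i, i < 4 -> t \in h i -> False.
    move=> i Hi Hti; have := Hbl i Hi; rewrite /= /playable => /hasPn /(_ t Hti).
    by rewrite Hm.
  by case/or4P => Hti; [apply: (K 0) | apply: (K 1) | apply: (K 2) | apply: (K 3)].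
have Bnd : forall t, t \in B -> t.1 < 7 /\ t.2 < 7 by move=> t /Hs /all_tiles_bnd.
case: (eqVneq e1 e2) => [E|Hne]; last first.
  have Hp2 := split_perm Hu Hs Hin.
  have [S1 S2 _] := perm_facts Hp2.
  have := allP Fx_check e1; rewrite mem_iota He1 => /(_ isT) /allP /(_ e2).
  rewrite mem_iota He2 (negbTE Hne) /= => /(_ isT) /andP [].
  rewrite /Fx -/(pipsum B) S1 S2 => a b; split.
    by apply: leq_trans (leq_addr _ _); apply: (leq_trans _ a).
  by apply: leq_trans (leq_addr _ _); apply: (leq_trans _ b).
subst e2.
have Hin' : forall t, t \in all_tiles -> matches t e1 -> t \in B.
  by move=> t Ht Hm; apply: Hin; rewrite // Hm.
have Hp2 := split_perm Hu Hs Hin'.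
set R := filter _ B in Hp2.
have [S1 S2 S3] := perm_facts Hp2.
have := allP Xx_check e1; rewrite mem_iota He1 => /(_ isT) /and3P [/eqP X1 /eqP X2 /allP X3].
have RB : forall t, t \in R -> t.1 < 7 /\ t.2 < 7.
  by move=> t; rewrite mem_filter => /andP [_ /Bnd].
have [R1 R2] := Hc_sum RB.
have R0 : Hc e1 R = 0 by apply: Hc0 => t; rewrite mem_filter => /andP [].
have Pos : forall v, v < 7 -> v != e1 -> 0 < Hc v R.
  move=> v Hv Hvx; have := Hpar v; rewrite S3.
  have := X3 v; rewrite mem_iota Hv => /(_ isT) /eqP ->.
  rewrite (negbTE Hvx) eq_sym (negbTE Hvx) /= addn0 addn0.
  by case: (Hc v R).
rewrite -/(pipsum B) S1 S2 X1 X2.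
exact: final_arith.
Qed.

Theorem mainTheorem3 :
  ((exists s, tranca_final s /\ board_tiles s = 10) /\
   (forall s, tranca_final s -> 10 <= board_tiles s)) /\
  ((exists s, tranca_final s /\ board_pips s = 42) /\
   (forall s, tranca_final s -> 42 <= board_pips s)).
Proof.
split; split.
- by exists s_ex; split; [exact: s_ex_final | exact: s_ex_tiles].
- move=> s [h [t [Hd Ht Hr Hb _]]].
  exact: (bound (inv_reach (inv_open Hd Ht) Hr) Hb).1.
- by exists s_ex; split; [exact: s_ex_final | exact: s_ex_pips].
- move=> s [h [t [Hd Ht Hr Hb _]]].
  exact: (bound (inv_reach (inv_open Hd Ht) Hr) Hb).2.
Qed.
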